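(* There is no open neighborhood $V$ of zero in $C^\infty_{\mathrm{ap}}(\mathbb{R}^n,\mathbb{R}^n)$ such that the restriction $\mathrm{Exp}_{\mathrm{LG}}|_V:V\to\mathrm{Diff}^\infty_{\mathrm{ap}}(\mathbb{R}^n)$ is a $C^1_F$-diffeomorphism onto its image.
   Context: For integer $k\ge0$, $C^k_b(\mathbb{R}^n,\mathbb{R})$ is the space of $C^k$ functions with bounded continuous derivatives of order $\le k$, norm $|f|_k=\max_{|\beta|\le k}\sup|\partial^\beta f|$; $C^k_{\mathrm{ap}}=\{f\in C^k_b:\{f(\cdot+c)\}_{c\in\mathbb{R}^n}\text{ precompact in }C^k_b\}$; $C^\infty_{\mathrm{ap}}=\bigcap_{k\ge1}C^k_{\mathrm{ap}}$ with the Fréchet topology of the norms $|\cdot|_k$; vector-valued versions componentwise. $\mathrm{Diff}^\infty_{\mathrm{ap}}(\mathbb{R}^n)$ is the group of maps $\varphi=\mathrm{id}+f$, $f\in C^\infty_{\mathrm{ap}}(\mathbb{R}^n,\mathbb{R}^n)$, $\inf_x\det(I+[d_xf])>0$, with the Fréchet topology of $f$. $\mathrm{Exp}_{\mathrm{LG}}(u)=\varphi(1)$ where $\varphi$ is the unique $C^1_F$ solution in $\mathrm{Diff}^\infty_{\mathrm{ap}}(\mathbb{R}^n)$ of $\dot\varphi=u\circ\varphi$, $\varphi(0)=\mathrm{id}$. $C^1_F$: Fréchet continuously differentiable (directional derivatives exist and are jointly continuous in point and direction); a $C^1_F$-diffeomorphism onto its image is a homeomorphism onto its image which is $C^1_F$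 with $C^1_F$ inverse. *)

(* Defs.v *)
From HB Require Import structures.
From mathcomp Require Import all_boot all_order all_algebra.
From mathcomp Require Import all_classical all_reals all_analysis.
Set Implicit Arguments. Unset Strict Implicit. Unset Printing Implicit Defensive.
Import Order.TTheory GRing.Theory Num.Theory.
Import numFieldNormedType.Exports.
Local Open Scope classical_set_scope.
Local Open Scope ring_scope.

Section Defs.
Variables (R : realType) (n : nat).

Definition pt := 'rV[R]_n.
Definition vfun := pt -> pt.

Definition pd (i : 'I_n) (f : pt -> R) : pt -> R :=
  fun x => derive f x (delta_mx 0 i : pt).

(* iterated partial derivative along the list of coordinates s
   (multi-index of order size s) *)
Definition iterd (s : seq 'I_n) (f : pt -> R) : pt -> R := foldr pd f s.

Definition comp (f : vfun) (i : 'I_n) : pt -> R := fun x => f x ord0 i.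

Definition vadd (f g : vfun) : vfun := fun x => f x + g x.
Definition vsub (f g : vfun) : vfun := fun x => f x - g x.
Definition vscale (t : R) (f : vfun) : vfun := fun x => t *: f x.
Definition vzero : vfun := fun _ => 0.

Definition smooth (f : vfun) : Prop :=
  forall (i : 'I_n) (s : seq 'I_n),
    continuous (iterd s (comp f i)) /\
    forall (x : pt) (j : 'I_n), derivable (iterd s (comp f i)) x (delta_mx 0 j : pt).

Definition all_bounded (f : vfun) : Prop :=
  forall (i : 'I_n) (s : seq 'I_n), exists M : R,
    forall x : pt, `|iterd s (comp f i) x| <= M.

Definition knorm (k : nat) (f : vfun) : R :=
  sup [set r : R | exists (s : seq 'I_n) (i : 'I_n) (x : pt),
                     (size s <= k)%N /\ r = `|iterd s (comp f i) x| ].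

Definition transl (c : pt) (f : vfun) : vfun := fun x => f (x + c).

(* {f(.+c)}_c is precompact (= totally bounded) in (C^k_b, |.|_k), for all k *)
Definition ap_translates (f : vfun) : Prop :=
  forall (k : nat) (eps : R), 0 < eps ->
    exists cs : seq pt, forall c : pt,
      exists2 c', c' \in cs & knorm k (vsub (transl c f) (transl c' f)) < eps.

Definition Cinf_ap (f : vfun) : Prop :=
  smooth f /\ all_bounded f /\ ap_translates f.

Definition jac (f : vfun) (x : pt) : 'M[R]_n :=
  \matrix_(i < n, j < n) pd j (comp f i) x.

(* f is the displacement of an element id + f of Diff^infinity_ap(R^n) *)
Definition DiffAp (f : vfun) : Prop :=
  Cinf_ap f /\ exists2 d : R, 0 < d &
    forall x : pt, d <= \det (1%:M + jac f x).

Definition compose_id (u f : vfun) : vfun := fun x => u (x + f x).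

Definition unit_itv : set R := [set t | 0 <= t <= 1].

(* g : [0,1] -> C^inf_ap is a C^1_F solution in Diff^infinity_ap of
   d/dt (id + g t) = u o (id + g t), (id + g 0) = id. *)
Definition IsExpSol (u : vfun) (g : R -> vfun) : Prop :=
  g 0 = vzero /\
  (forall t, unit_itv t -> DiffAp (g t)) /\
  (forall t, unit_itv t -> Cinf_ap (compose_id u (g t))) /\
  (forall t, unit_itv t -> forall (k : nat) (eps : R), 0 < eps ->
     exists2 d : R, 0 < d & forall s, unit_itv s -> 0 < `|s - t| < d ->
       knorm k (vsub (vscale (s - t)^-1 (vsub (g s) (g t)))
                     (compose_id u (g t))) < eps) /\
  (forall t, unit_itv t -> forall (k : nat) (eps : R), 0 < eps ->
     exists2 d : R, 0 < d & forall s, unit_itv s -> `|s - t| < d ->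
       knorm k (vsub (compose_id u (g s)) (compose_id u (g t))) < eps).

(* Exp_LG(u) = phi(1), represented by its displacement phi(1) - id.
   (The solution is unique by the paper; if none existed we return 0.) *)
Definition expLG (u : vfun) : vfun :=
  match pselect (exists g, IsExpSol u g) with
  | left h => (proj1_sig (cid h)) 1
  | right _ => vzero
  end.

Definition open_nbhd0 (V : set vfun) : Prop :=
  (forall v, V v -> Cinf_ap v) /\ V vzero /\
  forall v, V v -> exists (k : nat) (d : R), 0 < d /\
     forall w, Cinf_ap w -> knorm k (vsub w v) < d -> V w.

Definition fcont_on (W : set vfun) (F : vfun -> vfun) : Prop :=
  forall w, W w -> forall (k : nat) (eps : R), 0 < eps ->
    exists (k' : nat) (d : R), 0 < d /\
      forall w', W w' -> knorm k' (vsub w' w) < d ->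
        knorm k (vsub (F w') (F w)) < eps.

Definition C1F_on (W : set vfun) (F : vfun -> vfun) : Prop :=
  exists dF : vfun -> vfun -> vfun,
    (forall w h, W w -> Cinf_ap h -> Cinf_ap (dF w h)) /\
    (forall w h, W w -> Cinf_ap h -> forall (k : nat) (eps : R), 0 < eps ->
       exists2 d : R, 0 < d & forall t : R, 0 < `|t| < d ->
         W (vadd w (vscale t h)) ->
         knorm k (vsub (vscale t^-1 (vsub (F (vadd w (vscale t h))) (F w)))
                       (dF w h)) < eps) /\
    (forall w h, W w -> Cinf_ap h -> forall (k : nat) (eps : R), 0 < eps ->
       exists (k' : nat) (d : R), 0 < d /\
         forall w' h', W w' -> Cinf_ap h' ->
           knorm k' (vsub w' w) < d -> knorm k' (vsub h' h) < d ->
           knorm k (vsub (dF w' h') (dF w h)) < eps).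

(* F|_V is a C^1_F diffeomorphism onto its image F(V) (in Diff^inf_ap,
   topologised via displacements). *)
Definition C1F_diffeo_onto_image (V : set vfun) (F : vfun -> vfun) : Prop :=
  (forall v, V v -> DiffAp (F v)) /\
  (forall v w, V v -> V w -> F v = F w -> v = w) /\
  fcont_on V F /\ C1F_on V F /\
  exists G : vfun -> vfun,
    (forall v, V v -> G (F v) = v) /\
    fcont_on (F @` V) G /\ C1F_on (F @` V) G.

End Defs.

(* Main.v *)
Require Import Defs.
From HB Require Import structures.
From mathcomp Require Import all_boot all_order all_algebra.
From mathcomp Require Import all_classical all_reals all_analysis.
From mathcomp Require Import ring lra.
Set Implicit Arguments. Unset Strict Implicit. Unset Printing Implicit Defensive.
Import Order.TTheory GRing.Theory Num.Theory.
Import numFieldNormedType.Exports.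
Local Open Scope classical_set_scope.
Local Open Scope ring_scope.

Section Prof.
Variables (R : realType) (n : nat) (i0 : 'I_n).

Lemma quot_coord (H : R -> R) (x : pt R n) (j : 'I_n) :
  (fun h : R => h^-1 *: (((fun y : pt R n => H (y ord0 i0)) \o shift x) (h *: (delta_mx 0 j : pt R n)) - H (x ord0 i0)))
  = if j == i0 then (fun h : R => h^-1 *: ((H \o shift (x ord0 i0)) (h *: 1) - H (x ord0 i0)))
    else (fun _ => 0).
Proof.
apply/funext => h /=; rewrite !mxE /= eq_sym.
case: (j == i0) => /=.
  by rewrite [h%:A]/GRing.scale /=.
by rewrite mulr0 add0r subrr scaler0.
Qed.

Lemma is_derive_coord (H : R -> R) (x : pt R n) (j : 'I_n) (b : R) :
  is_derive (x ord0 i0) 1 H b ->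
  is_derive x (delta_mx 0 j : pt R n) (fun y : pt R n => H (y ord0 i0)) ((j == i0)%:R * b).
Proof.
move=> [dH vH].
have E := quot_coord H x j.
split.
  rewrite /derivable E; case: (j == i0) => //; by apply: is_cvg_cst.
rewrite /derive E; case: (j == i0).
  by rewrite mul1r -vH.
by rewrite mul0r lim_cst.
Qed.
End Prof.
Section Prof2.
Variables (R : realType) (n : nat) (i0 : 'I_n).
Definition chain (D : nat -> R -> R) := forall m (y : R), is_derive y (1:R) (D m) (D m.+1 y).

Lemma iterd_coord (D : nat -> R -> R) (s : seq 'I_n) : chain D ->
  iterd s (fun y : pt R n => D 0%N (y ord0 i0)) =
  fun y => (all (pred1 i0) s)%:R * D (size s) (y ord0 i0).
Proof.
move=> hD; elim: s => [|j s IH] /=.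
  by apply/funext => y; rewrite mul1r.
rewrite IH /pd; apply/funext => x.
have h1 : is_derive (x ord0 i0) 1 (fun r => (all (pred1 i0) s)%:R * D (size s) r)
   ((all (pred1 i0) s)%:R * D (size s).+1 (x ord0 i0)).
  exact: (is_deriveZ ((all (pred1 i0) s)%:R) (hD (size s) (x ord0 i0))).
rewrite (@derive_val _ _ _ _ _ _ _ (@is_derive_coord R n i0 _ x j _ h1)).
by rewrite mulrA -natrM mulnb eq_sym.
Qed.
End Prof2.
Section Knorm.
Variables (R : realType) (n : nat) (i0 : 'I_n).
Definition mkv (Hc : 'I_n -> R -> R) : vfun R n := fun y => \row_i Hc i (y ord0 i0).

Lemma comp_mkv Hc i : Defs.comp (mkv Hc) i = fun y => Hc i (y ord0 i0).
Proof. by apply/funext => y; rewrite /Defs.comp /mkv mxE. Qed.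

Lemma iterd_mkv (Dc : 'I_n -> nat -> R -> R) s i : (forall i, chain (Dc i)) ->
  iterd s (Defs.comp (mkv (fun i => Dc i 0%N)) i) =
  fun y => (all (pred1 i0) s)%:R * Dc i (size s) (y ord0 i0).
Proof. by move=> hD; rewrite comp_mkv iterd_coord. Qed.

Lemma knorm_mkv_le (Dc : 'I_n -> nat -> R -> R) k M : (forall i, chain (Dc i)) ->
  0 <= M -> (forall i m y, (m <= k)%N -> `|Dc i m y| <= M) ->
  knorm k (mkv (fun i => Dc i 0%N)) <= M.
Proof.
move=> hD M0 hM; apply: ge_sup.
  by exists `|iterd [::] (Defs.comp (mkv (fun i => Dc i 0%N)) i0) 0|; exists [::], i0, 0.
move=> r [s [i [x [hs ->]]]]; rewrite iterd_mkv //.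
case: (all _ _) => /=; last by rewrite mul0r normr0.
by rewrite mul1r hM.
Qed.

Lemma knorm0_ge (f : vfun R n) M : (forall x i, `|f x ord0 i| <= M) ->
  forall x i, `|f x ord0 i| <= knorm 0 f.
Proof.
move=> hM x i; apply: ub_le_sup.
  exists M => r [s [j [y [hs ->]]]].
  by case: s hs => //= _; apply: hM.
by exists [::], i, x.
Qed.
End Knorm.
Section Cinf.
Variables (R : realType) (n : nat) (i0 : 'I_n).

Lemma chain_cont (D : nat -> R -> R) (c : R) m : chain D -> continuous (fun r => c * D m r).
Proof.
move=> hD r; apply: differentiable_continuous; apply/derivable1_diffP.
exact: (@ex_derive _ _ _ _ _ _ _ (is_deriveZ c (hD m r))).
Qed.

Lemma chain_cont1 (D : nat -> R -> R) m : chain D -> continuous (D m).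
Proof.
move=> hD r; apply: differentiable_continuous; apply/derivable1_diffP.
exact: (@ex_derive _ _ _ _ _ _ _ (hD m r)).
Qed.

Lemma chain_shift (D : nat -> R -> R) (a : R) : chain D -> chain (fun m y => D m (y + a)).
Proof.
move=> hD m y.
have hg : is_derive y (1:R) (fun r : R => r + a) 1.
  exact: (@is_derive_shift R y 1 a).
have := @is_derive1_comp R (D m) (fun r => r + a) y _ 1 (hD m (y + a)) hg.
by rewrite mulr1.
Qed.

Lemma chain_sub (D E : nat -> R -> R) : chain D -> chain E -> chain (fun m y => D m y - E m y).
Proof. by move=> hD hE m y; apply: is_deriveB. Qed.

Lemma Cinf_mkv (Dc : 'I_n -> nat -> R -> R) :
  (forall i, chain (Dc i)) ->
  (forall i m, exists M : R, forall y, `|Dc i m y| <= M) ->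
  (forall (k : nat) (eps : R), 0 < eps -> exists cs : seq R, forall c : R,
     exists2 c', c' \in cs & forall i m y, (m <= k)%N ->
       `|Dc i m (y + c) - Dc i m (y + c')| <= eps / 2) ->
  Cinf_ap (mkv i0 (fun i => Dc i 0%N)).
Proof.
move=> hD hB hA; split; [|split].
- move=> i s; rewrite iterd_mkv //; split.
    move=> y; apply: (@continuous_comp _ _ _ (fun M : pt R n => M ord0 i0) (fun r => (all (pred1 i0) s)%:R * Dc i (size s) r)).
      exact: coord_continuous.
    exact: chain_cont.
  move=> x j.
  exact: (@ex_derive _ _ _ _ _ _ _ (@is_derive_coord R n i0 _ x j _ (is_deriveZ ((all (pred1 i0) s)%:R) (hD i (size s) (x ord0 i0))))).
- move=> i s; have [M hM] := hB i (size s); exists `|M| => x.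
  rewrite iterd_mkv //; case: (all _ _); rewrite ?mul1r ?mul0r ?normr0 //.
  exact: le_trans (hM _) (ler_norm _).
- move=> k eps e0; have [cs hcs] := hA k eps e0.
  exists (map (fun r => const_mx r : pt R n) cs) => c.
  have [c' c'in hc'] := hcs (c ord0 i0).
  exists (const_mx c'); first exact: map_f.
  set Dd := fun i m y => Dc i m (y + c ord0 i0) - Dc i m (y + c').
  have -> : vsub (transl c (mkv i0 (fun i => Dc i 0%N))) (transl (const_mx c') (mkv i0 (fun i => Dc i 0%N)))
     = mkv i0 (fun i => Dd i 0%N).
    apply/funext => y; apply/matrixP => a b.
    by rewrite /vsub /transl /mkv /Dd !mxE.
  apply: (@le_lt_trans _ _ (eps / 2)); last by rewrite ltr_pdivrMr // ltr_pMr // ltr1n.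
  apply: knorm_mkv_le.
  + move=> i; apply: chain_sub; exact: chain_shift.
  + by rewrite divr_ge0 // ltW.
  + by move=> i m y hm; rewrite /Dd hc'.
Qed.
End Cinf.
Section Z.
Variable R : realType.

Lemma small_eq0 (x : R) : (forall e, 0 < e -> `|x| <= e) -> x = 0.
Proof.
move=> h; apply/normr0_eq0/eqP; rewrite eq_le normr_ge0 andbT.
apply/negPn/negP; rewrite -ltNge => hx.
have := h _ (divr_gt0 hx (ltr0n _ 2)).
rewrite ler_pdivlMr // => hh. have : `|x| * 1 < `|x| * 2%:R by rewrite ltr_pM2l // ltr1n. by rewrite mulr1 ltNge hh.
Qed.

Lemma zero_deriv_cst (th : R -> R) :
  (forall t : R, 0 <= t <= 1 -> forall e : R, 0 < e -> exists2 d : R, 0 < d &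
     forall s : R, 0 <= s <= 1 -> `|s - t| < d -> `|th s - th t| <= e * `|s - t|) ->
  th 1 = th 0.
Proof.
move=> hyp; apply/eqP; rewrite -subr_eq0; apply/eqP/small_eq0 => e e0.
pose S := [set t : R | (0 <= t <= 1) /\ forall r : R, 0 <= r <= t -> `|th r - th 0| <= e * r].
have S0 : S 0.
  rewrite /S /=; split; first by apply/andP; split => //; exact: ler01.
  move=> r /andP[r0 r0']; have -> : r = 0 by apply/le_anti; rewrite r0 r0'.
  by rewrite subrr normr0 mulr0.
have Sub : has_ubound S by exists 1 => t [/andP[_ ->]].
have Ssup : has_sup S by split; [exists 0 | exact: Sub].
set tau := sup S.
have tau0 : 0 <= tau by apply: ub_le_sup.
have tau1 : tau <= 1 by apply: ge_sup; [exists 0 | move=> t [/andP[_ ->]]].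
have taui : 0 <= tau <= 1 by rewrite tau0 tau1.
have [d d0 hd] := hyp tau taui e e0.
have Htau : forall r, 0 <= r <= tau -> `|th r - th 0| <= e * r.
  move=> r /andP[r0 rt]; case: (ltrP r tau) => rt'.
    have [s [Ss1 Ss2] ltrs] : exists2 s, S s & tau - (tau - r) < s by apply: sup_adherent => //; rewrite subr_gt0.
    rewrite opprB addrCA subrr addr0 in ltrs.
    by apply: Ss2; rewrite r0 ltW.
  have rtau : r = tau by apply/le_anti; rewrite rt rt'.
  rewrite rtau.
  have [s [/andP[s0 s1] Ss2] lts] := sup_adherent d0 Ssup.
  have stau : s <= tau by apply: ub_le_sup => //; split; [rewrite s0 s1| exact: Ss2].
  have hs := Ss2 s (andb_true_intro (conj s0 (lexx s))).
  have hts : `|s - tau| < d by rewrite distrC ger0_norm ?subr_ge0 // ltrBlDr addrC -ltrBlDr.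
  have := hd s (andb_true_intro (conj s0 s1)) hts.
  rewrite [`|s - tau|]distrC [`|tau - s|]ger0_norm ?subr_ge0 // => h1.
  rewrite -(subrK (th s) (th tau)) -addrA.
  apply: le_trans (ler_normD _ _) _; rewrite distrC.
  have -> : e * tau = e * (tau - s) + e * s by rewrite -mulrDr subrK.
  by apply: lerD.
case: (ltrP tau 1) => ht1; last first.
  have ht : tau = 1 by apply/le_anti; rewrite tau1 ht1.
  have h01 : 0 <= (1:R) <= tau by rewrite ht ler01 lexx.
  by have := Htau 1 h01; rewrite mulr1.
exfalso.
pose t' := Num.min (tau + d / 2) 1.
have d2 : 0 < d / 2 by rewrite divr_gt0.
have t'gt : tau < t' by rewrite /t' lt_min ht1 ltrDl d2.
have t'le1 : t' <= 1 by rewrite /t' ge_min lexx orbT.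
have St' : S t'.
  split; first by rewrite t'le1 andbT (le_trans tau0) // ltW.
  move=> r /andP[r0 rt']; case: (lerP r tau) => rt; first by apply: Htau; rewrite r0 rt.
  have t'le : t' <= tau + d / 2 by rewrite /t' ge_min lexx.
  have hrt : `|r - tau| < d.
    rewrite ger0_norm; last by rewrite subr_ge0 ltW.
    rewrite ltrBlDl.
    apply: le_lt_trans rt' _; apply: le_lt_trans t'le _.
    by rewrite ltrD2l ltr_pdivrMr // ltr_pMr // ltr1n.
  have r1 : 0 <= r <= 1 by rewrite r0 (le_trans rt').
  have rtp : 0 <= r - tau by rewrite subr_ge0 ltW.
  have := hd r r1 hrt; rewrite [`|r - tau|]ger0_norm // => h1.
  rewrite -(subrK (th tau) (th r)) -addrA.
  apply: le_trans (ler_normD _ _) _.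
  have -> : e * r = e * (r - tau) + e * tau by rewrite -mulrDr subrK.
  apply: lerD => //; apply: Htau; by rewrite tau0 lexx.
have : t' <= tau by apply: ub_le_sup.
by rewrite leNgt t'gt.
Qed.
End Z.
Section Uniq.
Variables (R : realType) (n : nat).

Lemma bnd_unif (h : vfun R n) : all_bounded h -> exists M : R, forall y j, `|h y ord0 j| <= M.
Proof.
move=> hb.
have [Mf hM] := @choice 'I_n R (fun j M => forall y, `|h y ord0 j| <= M) (fun j => hb j [::]).
exists (\sum_j `|Mf j|) => y j.
apply: le_trans (hM j y) _; apply: le_trans (ler_norm _) _.
rewrite (bigD1 j) //= lerDl; exact: sumr_ge0.
Qed.

Lemma sol_pointwise (u : vfun R n) (g : R -> vfun R n) : IsExpSol u g ->
  forall x i t, 0 <= t <= 1 -> forall e : R, 0 < e -> exists2 d : R, 0 < d &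
   forall s : R, 0 <= s <= 1 -> `|s - t| < d ->
   `|g s x ord0 i - g t x ord0 i - (s - t) * u (x + g t x) ord0 i| <= e * `|s - t|.
Proof.
move=> [g0 [hD [hC [hd hc]]]] x i t t01 e e0.
have [d d0 hdd] := hd t t01 0%N e e0.
exists d => // s s01 hst.
have [st|st] := eqVneq s t.
  by rewrite st !subrr mul0r subr0 normr0 mulr0.
have st0 : 0 < `|s - t| by rewrite normr_gt0 subr_eq0.
have := hdd s s01; rewrite st0 hst => /(_ isT) hk.
set f := vsub _ _ in hk.
have [Ms hMs] := bnd_unif (hD s s01).1.2.1.
have [Mt hMt] := bnd_unif (hD t t01).1.2.1.
have [Mc hMc] := bnd_unif (hC t t01).2.1.
have hf : forall y j, `|f y ord0 j| <= `|(s - t)^-1| * (Ms + Mt) + Mc.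
  move=> y j; rewrite /f /vsub /vscale /compose_id !mxE.
  apply: le_trans (ler_normB _ _) _; apply: lerD; last exact: hMc.
  rewrite normrM; apply: ler_wpM2l => //; apply: le_trans (ler_normB _ _) _.
  exact: lerD.
have := knorm0_ge hf x i.
move=> h2; have h3 : `|f x ord0 i| <= e by apply: le_trans h2 (ltW hk).
rewrite /f /vsub /vscale /compose_id !mxE in h3.
have -> : g s x ord0 i - g t x ord0 i - (s - t) * u (x + g t x) ord0 i
   = (s - t) * ((s - t)^-1 * (g s x ord0 i - g t x ord0 i) - u (x + g t x) ord0 i).
  by rewrite mulrBr mulrA divff ?mul1r // subr_eq0.
by rewrite normrM mulrC ler_wpM2r.
Qed.
End Uniq.
Section Const.
Variables (R : realType) (n : nat) (i0 : 'I_n).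

Definition cst_chain (a : R) : nat -> R -> R := fun m _ => if m == 0%N then a else 0.

Lemma chain_cst a : chain (cst_chain a).
Proof. by move=> m y; apply: is_derive_eq (is_derive_cst _ _ _) _; rewrite /cst_chain. Qed.

Lemma Cinf_const (c : 'I_n -> R) : Cinf_ap (mkv i0 (fun i _ => c i)).
Proof.
have -> : mkv i0 (fun i _ => c i) = mkv i0 (fun i => cst_chain (c i) 0%N) by [].
apply: (@Cinf_mkv R n i0 (fun i => cst_chain (c i))).
- move=> i; exact: chain_cst.
- by move=> i m; exists `|c i| => y; rewrite /cst_chain; case: eqP => _; rewrite ?normr0.
- move=> k eps e0; exists [:: 0] => c0; exists 0; first by rewrite inE.
  by move=> i m y _; rewrite subrr normr0 divr_ge0 // ltW.
Qed.

Lemma knorm_vzero k : knorm k (@vzero R n) <= 0.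
Proof.
have -> : @vzero R n = mkv i0 (fun i => cst_chain 0 0%N).
  by apply/funext => y; apply/matrixP => a b; rewrite /vzero /mkv !mxE.
apply: (@knorm_mkv_le R n i0 (fun i => cst_chain 0)) => //; first by move=> i; exact: chain_cst.
by move=> i m y _; rewrite /cst_chain; case: eqP; rewrite normr0.
Qed.

Lemma jac_const (c : 'I_n -> R) x : jac (mkv i0 (fun i _ => c i)) x = 0.
Proof.
apply/matrixP => a b; rewrite /jac !mxE.
have := @iterd_mkv R n i0 (fun i => cst_chain (c i)) [:: b] a (fun i => chain_cst (c i)).
by move=> /(congr1 (fun F => F x)) /= ->; rewrite /cst_chain /= mulr0.
Qed.

Lemma sol_const (c : 'I_n -> R) :
  IsExpSol (mkv i0 (fun i _ => c i)) (fun t => mkv i0 (fun i _ => t * c i)).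
Proof.
have cz : forall F : vfun R n, F = @vzero R n -> forall k eps, 0 < eps -> knorm k F < eps.
  by move=> F -> k eps e0; apply: le_lt_trans (knorm_vzero k) e0.
have hcomp : forall t, compose_id (mkv i0 (fun i _ => c i)) (mkv i0 (fun i _ => t * c i)) = mkv i0 (fun i _ => c i).
  by move=> t; apply/funext => y; apply/matrixP => a b; rewrite /compose_id /mkv !mxE.
split; [|split; [|split; [|split]]].
- by apply/funext => y; apply/matrixP => a b; rewrite /vzero /mkv !mxE mul0r.
- move=> t _; split; first exact: (Cinf_const (fun i => t * c i)).
  exists 1 => // x; rewrite (jac_const (fun i => t * c i)) addr0 det1 //.
- by move=> t _; rewrite hcomp; exact: Cinf_const.
- move=> t _ k eps e0; exists 1 => // s _ /andP[st _]; apply: cz e0.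
  apply/funext => y; apply/matrixP => a b; rewrite /vsub /vscale /compose_id /vzero /mkv !mxE.
  rewrite -mulrBl mulrA mulVf ?mul1r ?subrr //.
  by rewrite -normr_gt0.
- move=> t _ k eps e0; exists 1 => // s _ _; apply: cz e0.
  by rewrite !hcomp; apply/funext => y; apply/matrixP => a b; rewrite /vsub /vzero !mxE subrr.
Qed.

Lemma expLG_const (c : 'I_n -> R) : expLG (mkv i0 (fun i _ => c i)) = mkv i0 (fun i _ => c i).
Proof.
rewrite /expLG; case: pselect => [h|h]; last first.
  by exfalso; apply: h; exists (fun t => mkv i0 (fun i _ => t * c i)); exact: sol_const.
case: (cid h) => g hg /=.
apply/funext => x; apply/matrixP => a i; rewrite (ord1 a) {a}.
have [g0 _] := hg.
set th := fun t => g t x ord0 i - t * c i.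
have : th 1 = th 0.
  apply: zero_deriv_cst => t t01 e e0.
  have [d d0 hd] := sol_pointwise hg x i t01 e0.
  exists d => // s s01 hst; have := hd s s01 hst.
  rewrite /th /mkv mxE.
  suff -> : g s x ord0 i - s * c i - (g t x ord0 i - t * c i) = g s x ord0 i - g t x ord0 i - (s - t) * c i by [].
  by ring.
rewrite /th g0 /vzero mxE mul1r mul0r subr0 => /eqP; rewrite subr_eq0 => /eqP ->.
by rewrite /mkv mxE.
Qed.
End Const.
Lemma deriv_epsdelta (R : realType) (f : R -> R) (y0 a : R) : is_derive y0 1 f a ->
  forall e : R, 0 < e -> exists2 d : R, 0 < d & forall y, `|y - y0| < d ->
    `|f y - f y0 - a * (y - y0)| <= e * `|y - y0|.
Proof.
move=> [hd hv] e e0.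
have hc : (fun h : R => h^-1 *: ((f \o shift y0) (h *: 1) - f y0)) @ 0^' --> a.
  by rewrite -hv; exact: hd.
move/cvgrPdist_le : hc => /(_ e e0).
rewrite near_withinE; move=> /nbhs_ballP [d d0 hb].
exists d => // y hy.
have [->|yy0] := eqVneq y y0; first by rewrite !subrr mulr0 subrr normr0 mulr0.
have h0 : y - y0 != 0 by rewrite subr_eq0.
have := hb (y - y0); rewrite /ball /= sub0r normrN => /(_ hy h0).
rewrite /shift /= (_ : (y - y0)%:A = y - y0); last by rewrite [_%:A]/GRing.scale /= mulr1.
rewrite subrK [_ *: _]/GRing.scale /= => h1.
have -> : f y - f y0 - a * (y - y0) = - ((y - y0) * (a - (y - y0)^-1 * (f y - f y0))).
  by field.
by rewrite normrN normrM mulrC ler_wpM2r.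
Qed.
Inductive ex := Cs | Sn | Fv | Bt | Cn of nat | Ng of ex | Ad of ex & ex | Ml of ex & ex.

Fixpoint dv (e : ex) : ex :=
  match e with
  | Cs => Ng Sn
  | Sn => Cs
  | Fv => Ml Bt (Ml Sn (Ml Fv Fv))
  | Bt => Cn 0
  | Cn _ => Cn 0
  | Ng a => Ng (dv a)
  | Ad a b => Ad (dv a) (dv b)
  | Ml a b => Ad (Ml (dv a) b) (Ml a (dv b))
  end.

Section Ev.
Variable R : realType.

Fixpoint ev (b z : R) (e : ex) : R :=
  match e with
  | Cs => cos z
  | Sn => sin z
  | Fv => (1 + b * cos z)^-1
  | Bt => b
  | Cn k => k%:R
  | Ng a => - ev b z a
  | Ad a c => ev b z a + ev b z c
  | Ml a c => ev b z a * ev b z c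
  end.

Fixpoint bnd (e : ex) : R :=
  match e with
  | Cs => 1 | Sn => 1 | Fv => 2 | Bt => 1 | Cn k => k%:R
  | Ng a => bnd a | Ad a c => bnd a + bnd c | Ml a c => bnd a * bnd c
  end.

Lemma bnd_ge0 e : 0 <= bnd e.
Proof.
elim: e => [||||k|a ha|a ha c hc|a ha c hc] /=; try exact: ler01; try exact: ler0n; try done.
- exact: addr_ge0.
- exact: mulr_ge0.
Qed.

Lemma den_ge (b z : R) : 0 <= b <= 1/2 -> 1/2 <= 1 + b * cos z.
Proof.
move=> /andP[b0 b1].
have hc := cos_geN1 z.
have : - b <= b * cos z by rewrite -mulrN1 ler_wpM2l.
lra.
Qed.

Lemma ev_bnd (b z : R) e : 0 <= b <= 1/2 -> `|ev b z e| <= bnd e.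
Proof.
move=> hb; elim: e => /=.
- exact: cos_max.
- exact: sin_max.
- have h := den_ge z hb.
  rewrite normfV ger0_norm; last lra.
  have hp : 0 < 1 + b * cos z by lra.
  rewrite -[_^-1]mul1r ler_pdivrMr //; lra.
- move: hb => /andP[b0 b1]; rewrite ger0_norm //; lra.
- by move=> k; rewrite normr_nat.
- by move=> a ha; rewrite normrN.
- by move=> a ha c hc; apply: le_trans (ler_normD _ _) _; apply: lerD.
- by move=> a ha c hc; rewrite normrM; apply: ler_pM.
Qed.

Lemma ev_per (b z : R) e : ev b (z + pi *+ 2) e = ev b z e.
Proof.
by elim: e => //= [|||a -> |a -> c ->|a -> c ->]; rewrite ?cosD2pi ?sinD2pi.
Qed.

Lemma ev_deriv (b z : R) e : 0 <= b <= 1/2 ->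
  is_derive z 1 (fun z => ev b z e) (ev b z (dv e)).
Proof.
move=> hb; elim: e => /=.
- exact: is_derive_cos.
- exact: is_derive_sin.
- have hden : 1 + b * cos z != 0 by have := den_ge z hb; apply: contraTneq => ->; lra.
  have h1 : is_derive z 1 (fun z => 1 + b * cos z) (b * - sin z).
    have -> : (fun z => 1 + b * cos z) = (cst 1 + b \*: cos : R -> R) by apply/funext.
    have := (is_deriveD (is_derive_cst (1:R) z (1:R)) (is_deriveZ b (is_derive_cos z))).
    by rewrite add0r.
  have := @is_deriveV R (fun z => 1 + b * cos z) z _ 1 hden h1.
  move=> h; apply: is_derive_eq h _; rewrite [_ *: _]/GRing.scale /=.
  by field.
- exact: is_derive_cst.
- move=> k; exact: is_derive_cst.
- by move=> a ha; apply: is_deriveN.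
- by move=> a ha c hc; apply: is_deriveD.
- move=> a ha c hc; have h := is_deriveM ha hc.
  apply: is_derive_eq h _; rewrite /GRing.scale /=; ring.
Qed.
End Ev.
Section Prof.
Variable R : realType.
Variables (b w P : R).
Hypothesis hb : 0 <= b <= 1/2.

Definition Dp (m : nat) (y : R) := P * w ^+ m * ev b (w * y) (iter m dv Fv).

Lemma is_derive_lin (y : R) : is_derive y (1:R) (fun y : R => w * y) w.
Proof.
have h := is_deriveZ w (is_derive_id y (1:R)).
by apply: is_derive_eq h _; rewrite /GRing.scale /= mulr1.
Qed.

Lemma Dp_chain m (y : R) : is_derive y (1:R) (Dp m) (Dp m.+1 y).
Proof.
have h1 := @is_derive1_comp R (fun z => ev b z (iter m dv Fv)) (fun y => w * y) y _ _
   (ev_deriv (w * y) (iter m dv Fv) hb) (is_derive_lin y).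
have h2 := is_deriveZ (P * w ^+ m) h1.
apply: is_derive_eq h2 _; rewrite /Dp /GRing.scale /= exprS; ring.
Qed.

Lemma Dp_bnd m y : `|Dp m y| <= `|P| * `|w| ^+ m * bnd R (iter m dv Fv).
Proof.
rewrite /Dp !normrM normrX; apply: ler_wpM2l; first by rewrite mulr_ge0 // exprn_ge0.
exact: ev_bnd.
Qed.

Hypothesis hPw : w * P = pi *+ 2.

Lemma Dp_per m y : Dp m (y + P) = Dp m y.
Proof. by rewrite /Dp mulrDr hPw ev_per. Qed.

Definition Gx := Ml Sn (Ml Fv Fv).

Lemma ev_factor m z : ev b z (iter m.+1 dv Fv) = b * ev b z (iter m dv Gx).
Proof.
elim: m z => [|m IH] z //=.
have h1 := ev_deriv z (iter m.+1 dv Fv) hb.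
have h2 := is_deriveZ b (ev_deriv z (iter m dv Gx) hb).
have e1 : (fun z => ev b z (iter m.+1 dv Fv)) = (fun z => b * ev b z (iter m dv Gx)).
  by apply/funext => t; rewrite IH.
rewrite e1 in h1.
have := @derive_val _ _ _ _ _ _ _ h1.
by rewrite (@derive_val _ _ _ _ _ _ _ h2) /GRing.scale /= => <-.
Qed.
End Prof.
Section Ap.
Variable R : realType.
Variables (b w P : R).
Hypothesis hb : 0 <= b <= 1/2.
Hypothesis hPw : w * P = pi *+ 2.
Hypothesis hP : 0 < P.

Lemma Dp_pern m y (k : nat) : Dp b w P m (y + k%:R * P) = Dp b w P m y.
Proof.
elim: k y => [|k IH] y; first by rewrite mul0r addr0.
by rewrite -addn1 natrD mulrDl mul1r addrA (Dp_per b hPw) IH.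
Qed.

Lemma Dp_perz m y (q : int) : Dp b w P m (y + q%:~R * P) = Dp b w P m y.
Proof.
case: q => k; first by rewrite Dp_pern.
rewrite NegzE mulrNz mulNr.
by rewrite -[in RHS](subrK ((k.+1)%:R * P) y) Dp_pern.
Qed.

Lemma Dp_cont m : continuous (Dp b w P m).
Proof.
move=> r; apply: differentiable_continuous; apply/derivable1_diffP.
exact: (@ex_derive _ _ _ _ _ _ _ (Dp_chain w P hb m r)).
Qed.

Lemma Dp_lip m a c : `|Dp b w P m c - Dp b w P m a| <=
   (`|P| * `|w| ^+ m.+1 * bnd R (iter m.+1 dv Fv)) * `|c - a|.
Proof.
wlog ac : a c / a <= c.
  move=> H; case: (leP a c) => h; first exact: (H a c h).
  by rewrite distrC [`|c - a|]distrC (H c a) // ltW.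
have [x _ ->] := @MVT_segment R (Dp b w P m) (Dp b w P m.+1) a c ac
  (fun x _ => Dp_chain w P hb m x) (continuous_subspaceT (@Dp_cont m)).
by rewrite normrM ler_wpM2r // Dp_bnd.
Qed.

Lemma Dp_ap (k : nat) (eps : R) : 0 < eps -> exists cs : seq R, forall c : R,
  exists2 c', c' \in cs & forall m y, (m <= k)%N ->
    `|Dp b w P m (y + c) - Dp b w P m (y + c')| <= eps / 2.
Proof.
move=> e0.
pose Lm m := `|P| * `|w| ^+ m.+1 * bnd R (iter m.+1 dv Fv).
have Lm0 m : 0 <= Lm m by rewrite /Lm mulr_ge0 ?bnd_ge0 // mulr_ge0 // exprn_ge0.
pose L := \sum_(m < k.+1) Lm m + 1.
have L0 : 0 < L by rewrite /L ltr_pwDr // sumr_ge0.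
have LmL m : (m <= k)%N -> Lm m <= L.
  move=> hm; rewrite /L (bigD1 (Ordinal (hm : (m < k.+1)%N))) //= -addrA lerDl.
  by rewrite addr_ge0 // sumr_ge0.
have e2 : 0 < eps / 2 by rewrite divr_gt0.
pose N := (Num.trunc (P * L / (eps / 2))).+1.
have N0 : (0 < N%:R :> R) by rewrite ltr0n.
pose dl := P / N%:R.
have dl0 : 0 < dl by rewrite divr_gt0.
have dlL : dl * L <= eps / 2.
  have h := truncnS_gt (P * L / (eps / 2)); rewrite ltr_pdivrMr // in h.
  rewrite /dl mulrAC ler_pdivrMr // [X in _ <= X]mulrC; exact: ltW.
exists [seq j%:R * dl | j <- iota 0 N] => c.
pose q := Num.floor (c / P).
pose r0 := c - q%:~R * P.
have r0b : 0 <= r0 < P.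
  have := floor_itv (c / P); rewrite -/q => /andP[h1 h2].
  rewrite /r0 subr_ge0 -ler_pdivlMr // h1 /= ltrBlDl.
  have e : q%:~R * P + P = (q + 1)%:~R * P by rewrite intrD mulrDl mul1r.
  by rewrite e -ltr_pdivrMr.
have r0dl : 0 <= r0 / dl by apply: divr_ge0; [by case/andP: r0b | exact: ltW].
pose j := Num.trunc (r0 / dl).
have := truncn_itv r0dl; rewrite -/j => /andP[j1 j2].
have jN : (j < N)%N.
  rewrite truncn_lt_nat //.
  rewrite ltr_pdivrMr // /dl mulrCA divff ?mulr1 ?(andP r0b).2 //.
  by rewrite gt_eqF.
exists (j%:R * dl).
  by apply/mapP; exists j => //; rewrite mem_iota add0n jN.
move=> m y hm.
have -> : y + c = (y + r0) + q%:~R * P by rewrite /r0 addrA subrK.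
rewrite Dp_perz.
apply: le_trans (Dp_lip _ _ _) _.
apply: le_trans (ler_wpM2r _ (LmL m hm)) _ => //.
apply: le_trans _ dlL; rewrite mulrC ler_wpM2r ?ltW //.
rewrite (_ : y + r0 - (y + j%:R * dl) = r0 - j%:R * dl); last by ring.
rewrite ler_pdivlMr // in j1; rewrite ltr_pdivrMr // in j2.
rewrite ger0_norm; last by rewrite subr_ge0.
rewrite ltrBlDl; apply: lt_le_trans j2 _; rewrite -natr1 mulrDl mul1r addrC.
by [].
Qed.
End Ap.
Section Afun.
Variable R : realType.
Variables (b w P : R).
Hypothesis hb : 0 <= b <= 1/2.
Hypothesis hPw : w * P = pi *+ 2.
Hypothesis hP : 0 < P.

Lemma w_gt0 : 0 < w.
Proof.
have h : 0 < w * P by rewrite hPw pmulrn_lgt0 // pi_gt0.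
by rewrite -(pmulr_lgt0 _ hP).
Qed.

Definition Af (y : R) := (y + b / w * sin (w * y)) / P.
Definition Adf (y : R) := (1 + b * cos (w * y)) / P.

Lemma Af_derive (y : R) : is_derive y (1:R) Af (Adf y).
Proof.
have hw := w_gt0.
have h1 := @is_derive1_comp R sin (fun y => w * y) y _ _ (is_derive_sin (w * y)) (is_derive_lin w y).
have h2 := is_deriveD (is_derive_id y (1:R)) (is_deriveZ (b / w) h1).
have h3 := is_deriveZ (P^-1) h2.
have E : Af = (P^-1 \*: (id + (b / w) \*: (fun y => sin (w * y)))).
  by apply/funext => z; rewrite /Af /= mulrC.
rewrite E; apply: is_derive_eq h3 _.
rewrite /Adf /GRing.scale /=; field.
by rewrite gt_eqF // gt_eqF.
Qed.

Lemma den_pos (y : R) : 0 < 1 + b * cos (w * y).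
Proof. have := den_ge (w * y) hb; lra. Qed.

Lemma Ad_pos y : 0 < Adf y.
Proof. by rewrite /Adf divr_gt0 // den_pos. Qed.

Lemma Af_per y : Af (y + P) = Af y + 1.
Proof.
rewrite /Af mulrDr hPw sinD2pi.
by field; rewrite !gt_eqF // w_gt0.
Qed.

Lemma Af_lt y1 y2 : y1 < y2 -> Af y1 < Af y2.
Proof.
move=> lt12.
have [c _ E] := @MVT R Af Adf y1 y2 lt12 (fun x _ => Af_derive x)
   (continuous_subspaceT (fun x => differentiable_continuous
      (proj1 (derivable1_diffP Af x) (@ex_derive _ _ _ _ _ _ _ (Af_derive x))))).
by rewrite -subr_gt0 E mulr_gt0 ?Ad_pos // subr_gt0.
Qed.

Lemma Af_inj y1 y2 : Af y1 = Af y2 -> y1 = y2.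
Proof.
move=> E; case: (ltgtP y1 y2) => // h.
  by have := Af_lt h; rewrite E ltxx.
by have := Af_lt h; rewrite E ltxx.
Qed.

Lemma Ad_Dp y : Adf y * Dp b w P 0 y = 1.
Proof.
rewrite /Adf /Dp /= expr0 mulr1.
have := den_pos y; have := hP; move=> h1 h2.
by field; rewrite !gt_eqF.
Qed.
End Afun.

Section Field.
Variables (R : realType) (n : nat) (i0 : 'I_n).
Variables (b w P : R).
Hypothesis hb : 0 <= b <= 1/2.
Hypothesis hPw : w * P = pi *+ 2.
Hypothesis hP : 0 < P.

Definition Dcu (i : 'I_n) m y := (i == i0)%:R * Dp b w P m y.
Definition uP : vfun R n := mkv i0 (fun i => Dcu i 0).
Definition uC : vfun R n := mkv i0 (fun i _ => (i == i0)%:R * P).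

Lemma flow_uP : (exists g, IsExpSol uP g) -> expLG uP = uC.
Proof.
move=> hex; rewrite /expLG; case: pselect => [h|//]; case: (cid h) => g hg /=.
apply/funext => x; apply/matrixP => a i; rewrite (ord1 a) {a}.
have [g0 _] := hg.
rewrite /uC /mkv mxE.
have hval t : uP (x + g t x) ord0 i = (i == i0)%:R * Dp b w P 0 (x ord0 i0 + g t x ord0 i0).
  by rewrite /uP /mkv /Dcu !mxE.
case: (eqVneq i i0) => [ei | hi]; last first.
  have : g 1 x ord0 i = g 0 x ord0 i.
    apply: (@zero_deriv_cst R (fun t => g t x ord0 i)) => t t01 e e0.
    have [d d0 hd] := sol_pointwise hg x i t01 e0.
    exists d => // s s01 hst; have := hd s s01 hst.
    by rewrite hval (negbTE hi) mul0r mulr0 subr0.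
  by move=> ->; rewrite g0 /vzero mxE mul0r.
rewrite ei eqxx mul1r in hval *.
pose ga t := x ord0 i0 + g t x ord0 i0.
pose th t := Af b w P (ga t) - t.
have : th 1 = th 0.
  apply: (@zero_deriv_cst R th) => t t01 e e0.
  pose psi := Dp b w P 0 (ga t).
  pose a := Adf b w P (ga t).
  have apsi : a * psi = 1 by exact: Ad_Dp.
  pose e1 := Num.min 1 (e / (2 * (`|a| + 1))).
  pose e2 := e / (2 * (`|psi| + 1)).
  have e10 : 0 < e1 by rewrite /e1 lt_min ltr01 divr_gt0 // mulr_gt0 // ltr_pwDr.
  have e20 : 0 < e2 by rewrite /e2 divr_gt0 // mulr_gt0 // ltr_pwDr.
  have [d2 d20 hd2] := deriv_epsdelta (Af_derive b hPw hP (ga t)) e20.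
  have [d1 d10 hd1] := sol_pointwise hg x i0 t01 e10.
  have p10 : 0 < `|psi| + 1 by rewrite ltr_pwDr.
  exists (Num.min d1 (d2 / (`|psi| + 1))); first by rewrite lt_min d10 divr_gt0.
  move=> s s01; rewrite lt_min => /andP[hst1 hst2].
  have H1 := hd1 s s01 hst1; rewrite hval -/(ga t) -/psi /= mulr1n mul1r in H1.
  have gdiff : ga s - ga t = g s x ord0 i0 - g t x ord0 i0 by rewrite /ga; ring.
  have e11 : e1 <= 1 by rewrite /e1 ge_min lexx.
  have Hg : `|ga s - ga t| <= (`|psi| + 1) * `|s - t|.
    rewrite gdiff -(subrK ((s - t) * psi) (g s x ord0 i0 - g t x ord0 i0)).
    apply: le_trans (ler_normD _ _) _.
    rewrite [`|(s - t) * psi|]normrM [(_ + 1) * _]mulrDl mul1r addrC [`|s - t| * `|psi|]mulrC; apply: lerD => //.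
    by apply: le_trans H1 _; rewrite -[X in _ <= X]mul1r ler_wpM2r.
  have Hg2 : `|ga s - ga t| < d2.
    apply: le_lt_trans Hg _; rewrite mulrC -ltr_pdivlMr //.
  have H2 := hd2 (ga s) Hg2.
  have -> : th s - th t = (Af b w P (ga s) - Af b w P (ga t) - a * (ga s - ga t))
       + a * ((g s x ord0 i0 - g t x ord0 i0) - (s - t) * psi).
    rewrite /th -gdiff; transitivity (Af b w P (ga s) - Af b w P (ga t) - a * psi * (s - t)); first by rewrite apsi mul1r; ring.
    ring.
  apply: le_trans (ler_normD _ _) _.
  have -> : e * `|s - t| = e2 * ((`|psi| + 1) * `|s - t|) + (e / 2) * `|s - t|.
    rewrite /e2; field; rewrite gt_eqF //.
  apply: lerD; first by apply: le_trans H2 _; rewrite ler_wpM2l // ltW.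
  rewrite normrM; apply: le_trans (ler_wpM2l _ H1) _ => //.
  rewrite mulrA ler_wpM2r //.
  have e1b : e1 <= e / (2 * (`|a| + 1)) by rewrite /e1 ge_min lexx orbT.
  apply: le_trans (ler_wpM2l (normr_ge0 a) e1b) _.
  have a10 : 0 < `|a| + 1 by rewrite ltr_pwDr.
  have -> : `|a| * (e / (2 * (`|a| + 1))) = (`|a| / (`|a| + 1)) * (e / 2).
    by field; rewrite gt_eqF.
  apply: ler_piMl; first by rewrite divr_ge0 // ltW.
  by rewrite ler_pdivrMr // mul1r lerDl.
rewrite /th /ga g0 /vzero mxE addr0 subr0 => E.
have : Af b w P (x ord0 i0 + g 1 x ord0 i0) = Af b w P (x ord0 i0 + P).
  by rewrite Af_per // -E subrK.
by move/(Af_inj hb hPw hP)/addrI.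
Qed.
Lemma Dcu_abs i m y : `|Dcu i m y| <= `|Dp b w P m y|.
Proof.
rewrite /Dcu normrM; case: (i == i0); rewrite ?normr1 ?mul1r ?normr0 ?mul0r //.
Qed.

Lemma Cinf_uP : Cinf_ap uP.
Proof.
apply: (@Cinf_mkv R n i0 Dcu).
- move=> i m y; exact: (is_deriveZ ((i == i0)%:R) (Dp_chain w P hb m y)).
- move=> i m; exists (`|P| * `|w| ^+ m * bnd R (iter m dv Fv)) => y.
  exact: le_trans (Dcu_abs _ _ _) (Dp_bnd _ _ hb _ _).
- move=> k eps e0; have [cs hcs] := Dp_ap hb hPw hP k e0.
  exists cs => c; have [c' c'in hc'] := hcs c; exists c' => // i m y hm.
  rewrite /Dcu -mulrBr normrM; apply: le_trans (hc' m y hm).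
  by case: (i == i0); rewrite ?normr1 ?mul1r ?normr0 ?mul0r // divr_ge0 // ltW.
Qed.

Lemma knorm_uP_le k M : 2 * P <= M ->
  (forall m, (0 < m <= k)%N -> P * w ^+ m * b * bnd R (iter m.-1 dv Gx) <= M) ->
  knorm k uP <= M.
Proof.
move=> h0 h1.
have wp := w_gt0 hPw hP.
have M0 : 0 <= M by apply: le_trans h0; rewrite mulr_ge0 // ltW.
apply: (@knorm_mkv_le R n i0 Dcu) => //.
  move=> i m y; exact: (is_deriveZ ((i == i0)%:R) (Dp_chain w P hb m y)).
move=> i m y hm; apply: le_trans (Dcu_abs _ _ _) _.
case: m hm => [|m] hm.
  have P0 : 0 <= P by exact: ltW.
  rewrite /Dp /= expr0 mulr1 normrM (ger0_norm P0).
  apply: le_trans h0; rewrite mulrC ler_wpM2r //.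
  exact: (ev_bnd _ Fv hb).
apply: le_trans (h1 m.+1 hm) => /=.
have P0 : 0 <= P by exact: ltW.
have w0 : 0 <= w by exact: ltW.
have b0 : 0 <= b by case/andP: hb.
rewrite /Dp ev_factor // !normrM normrX (ger0_norm P0) (ger0_norm w0) (ger0_norm b0).
rewrite -!mulrA; apply: ler_wpM2l => //; apply: ler_wpM2l; first exact: exprn_ge0.
apply: ler_wpM2l => //; exact: ev_bnd.
Qed.

Lemma knorm_uC_le k : knorm k uC <= P.
Proof.
have -> : uC = mkv i0 (fun i => cst_chain ((i == i0)%:R * P) 0%N) by [].
apply: (@knorm_mkv_le R n i0 (fun i => cst_chain ((i == i0)%:R * P))); first by move=> i; exact: chain_cst.
  exact: ltW.
move=> i m y _; rewrite /cst_chain; case: eqP => _; last by rewrite normr0 ltW.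
have P0 : 0 <= P by exact: ltW.
by rewrite normrM (ger0_norm P0); case: (i == i0); rewrite ?normr1 ?mul1r ?normr0 ?mul0r.
Qed.
End Field.

Theorem corollary3p5 (R : realType) (n : nat) (hn : (0 < n)%N) :
  ~ exists V : set (vfun R n),
      open_nbhd0 V /\ C1F_diffeo_onto_image V (@expLG R n).
Proof.
move=> [V [[hVC [hV0 hVo]] [_ [hinj _]]]].
pose i0 : 'I_n := Ordinal hn.
have [k [d [d0 hball]]] := hVo _ hV0.
pose P := d / 4.
have hP : 0 < P by rewrite divr_gt0.
pose w := pi *+ 2 / P.
have hPw : w * P = pi *+ 2 by rewrite /w divfK // gt_eqF.
have wp : 0 < w by rewrite /w divr_gt0 // pmulrn_lgt0 // pi_gt0.
pose K := \sum_(m < k) w ^+ m.+1 * bnd R (iter m dv Gx).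
have K0 : 0 <= K by rewrite sumr_ge0 // => m _; rewrite mulr_ge0 ?bnd_ge0 // exprn_ge0 // ltW.
pose b := (1/2) / (K + 1).
have K1 : 0 < K + 1 by rewrite ltr_pwDr.
have bp : 0 < b by rewrite divr_gt0.
have hb : 0 <= b <= 1/2.
  rewrite ltW //= /b ler_pdivrMr // ler_peMr //; last by rewrite lerDr.
have bK : b * K <= 1/2.
  rewrite /b mulrAC ler_pdivrMr // ler_wpM2l ?lerDl //.
have vs0 : forall v : vfun R n, vsub v (@vzero R n) = v.
  by move=> v; apply/funext => y; rewrite /vsub /vzero subr0.
have VuC : V (uC i0 P).
  apply: hball; first exact: (Cinf_const i0 (fun i => (i == i0)%:R * P)).
  by rewrite vs0; apply: le_lt_trans (knorm_uC_le i0 hP k) _; rewrite /P ltr_pdivrMr // ltr_pMr // ltr1n.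
have VuP : V (uP i0 b w P).
  apply: hball; first exact: Cinf_uP.
  rewrite vs0; apply: (@le_lt_trans _ _ (d / 2)); last by rewrite ltr_pdivrMr // ltr_pMr // ltr1n.
  apply: knorm_uP_le => //.
    by rewrite /P; lra.
  move=> m /andP[m0 mk].
  have mk' : (m.-1 < k)%N by rewrite prednK.
  have hT : w ^+ m * bnd R (iter m.-1 dv Gx) <= K.
    rewrite /K (bigD1 (Ordinal mk')) //= prednK // lerDl.
    by rewrite sumr_ge0 // => j _; rewrite mulr_ge0 ?bnd_ge0 // exprn_ge0 // ltW.
  apply: (@le_trans _ _ (P * (b * K))).
    have -> : P * w ^+ m * b * bnd R (iter m.-1 dv Gx) = P * (b * (w ^+ m * bnd R (iter m.-1 dv Gx))) by ring.
    apply: ler_wpM2l; first exact: ltW hP.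
    apply: ler_wpM2l; first exact: ltW bp.
    exact: hT.
  apply: (@le_trans _ _ (P * (1/2))); first by apply: ler_wpM2l => //; exact: ltW hP.
  by rewrite /P; lra.
have val0 : uP i0 b w P 0 ord0 i0 = P / (1 + b).
  by rewrite /uP /mkv /Dcu !mxE eqxx mul1r /Dp /= expr0 mulr1 mulr0 cos0 mulr1.
have ne1 : uP i0 b w P <> uC i0 P.
  move=> /(congr1 (fun F : vfun R n => F 0 ord0 i0)); rewrite val0 /uC /mkv mxE eqxx mul1r.
  move/eqP; rewrite -subr_eq0 -{2}[P]mulr1 -mulrBr mulf_eq0 gt_eqF //= subr_eq0.
  by rewrite invr_eq1 -subr_eq0 addrAC subrr add0r gt_eqF.
have ne0 : uP i0 b w P <> @vzero R n.
  move=> /(congr1 (fun F : vfun R n => F 0 ord0 i0)); rewrite val0 /vzero mxE.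
  by move/eqP; rewrite mulf_eq0 gt_eqF //= invr_eq0 gt_eqF // ltr_pwDr.
case: (pselect (exists g, IsExpSol (uP i0 b w P) g)) => [h|h].
  apply: ne1; apply: hinj => //.
  rewrite (flow_uP hb hPw hP h).
  by rewrite /uC expLG_const.
apply: ne0; apply: hinj => //.
have -> : @vzero R n = mkv i0 (fun i _ => 0).
  by apply/funext => y; apply/matrixP => a c; rewrite /vzero /mkv !mxE.
rewrite expLG_const.
rewrite /expLG; case: pselect => [h'|_] //.
by apply/funext => y; apply/matrixP => a c; rewrite /vzero /mkv !mxE.
Qed.
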